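(* Let $n\geq 2$. Every 2-Jacobi subset of $S_n$ can be presented as a symmetric difference of finitely many Jacobi subsets of $S_n$.
   Context: A Lie ring is a Lie algebra over $\mathbb Z$. The left-normed bracket is $[a_1]=a_1$, $[a_1,\dots,a_n]=[[a_1,\dots,a_{n-1}],a_n]$. $S_n$ is the symmetric group on $\{1,\dots,n\}$. A subset $T\subseteq S_n$ is Jacobi if $\sum_{\sigma\in T}[a_{\sigma(1)},\dots,a_{\sigma(n)}]=0$ for all elements $a_1,\dots,a_n$ of every Lie ring, and 2-Jacobi if the same identity holds for all elements of every Lie algebra over the field $\mathbb Z/2$. *)

(* Defs.v *)
From mathcomp Require Import all_boot all_algebra all_fingroup.
Set Implicit Arguments. Unset Strict Implicit. Unset Printing Implicit Defensive.
Import GRing.Theory.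
Local Open Scope ring_scope.

Definition is_lie_ring (L : zmodType) (br : L -> L -> L) : Prop :=
  [/\ (forall x y z, br (x + y) z = br x z + br y z),
      (forall x y z, br x (y + z) = br x y + br x z),
      (forall x, br x x = 0) &
      (forall x y z, br x (br y z) + br y (br z x) + br z (br x y) = 0)].

Definition is_lie_algebra_F2 (L : lmodType 'F_2) (br : L -> L -> L) : Prop :=
  [/\ (forall (a : 'F_2) x y z, br (a *: x + y) z = a *: br x z + br y z),
      (forall (a : 'F_2) x y z, br x (a *: y + z) = a *: br x y + br x z),
      (forall x, br x x = 0) &
      (forall x y z, br x (br y z) + br y (br z x) + br z (br x y) = 0)].

Definition lnbr (L : zmodType) (br : L -> L -> L) (s : seq L) : L :=
  if s is x :: t then foldl br x t else 0.

Definition jacobi_sum n (L : zmodType) (br : L -> L -> L)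
    (T : {set {perm 'I_n}}) (a : 'I_n -> L) : L :=
  \sum_(s in T) lnbr br [seq a (s i) | i <- enum 'I_n].

Definition jacobi_set n (T : {set {perm 'I_n}}) : Prop :=
  forall (L : zmodType) (br : L -> L -> L), is_lie_ring br ->
    forall a : 'I_n -> L, jacobi_sum br T a = 0.

Definition jacobi2_set n (T : {set {perm 'I_n}}) : Prop :=
  forall (L : lmodType 'F_2) (br : L -> L -> L), is_lie_algebra_F2 br ->
    forall a : 'I_n -> L, jacobi_sum br T a = 0.

Definition symdiff (aT : finType) (A B : {set aT}) : {set aT} :=
  (A :\: B) :|: (B :\: A).

Definition symdiff_seq (aT : finType) (s : seq {set aT}) : {set aT} :=
  foldr (@symdiff aT) set0 s.

(* Main.v *)
Require Import Defs.
From mathcomp Require Import all_boot all_algebra all_fingroup.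
Set Implicit Arguments. Unset Strict Implicit. Unset Printing Implicit Defensive.
Import GRing.Theory.
Local Open Scope ring_scope.

Section LieRing.
Variables (L : zmodType) (br : L -> L -> L).
Hypothesis H : is_lie_ring br.

Lemma brDl x y z : br (x + y) z = br x z + br y z.
Proof. by case: H. Qed.
Lemma brDr x y z : br x (y + z) = br x y + br x z.
Proof. by case: H. Qed.
Lemma brxx x : br x x = 0.
Proof. by case: H. Qed.
Lemma brJ x y z : br x (br y z) + br y (br z x) + br z (br x y) = 0.
Proof. by case: H. Qed.

Lemma br0l z : br 0 z = 0.
Proof. by apply: (addrI (br 0 z)); rewrite addr0 -brDl addr0. Qed.
Lemma br0r z : br z 0 = 0.
Proof. by apply: (addrI (br z 0)); rewrite addr0 -brDr addr0. Qed.
Lemma brNl x z : br (- x) z = - br x z.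
Proof. by apply/eqP; rewrite -addr_eq0 addrC -brDl addrN br0l. Qed.
Lemma brNr x z : br z (- x) = - br z x.
Proof. by apply/eqP; rewrite -addr_eq0 addrC -brDr addrN br0r. Qed.
Lemma brC x y : br y x = - br x y.
Proof.
apply/eqP; rewrite -addr_eq0.
have := brxx (x + y); rewrite !brDl !brDr !brxx add0r addr0 addrC.
by move=> ->.
Qed.
Lemma brX x u y : br x (br u y) = br (br x u) y - br (br x y) u.
Proof.
have := brJ x u y.
rewrite (brC x y) brNr (brC (br x y) u) opprK (brC (br x u) y) => /eqP.
rewrite -addrA addr_eq0 => /eqP ->.
by rewrite opprD opprK addrC.
Qed.

Definition sgn (e : bool) (v : L) := if e then - v else v.

Lemma foldlD x y l : foldl br (x + y) l = foldl br x l + foldl br y l.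
Proof. by elim: l x y => //= z l IH x y; rewrite brDl IH. Qed.
Lemma foldl0 l : foldl br 0 l = 0.
Proof. by elim: l => //= z l IH; rewrite br0l. Qed.
Lemma foldlN x l : foldl br (- x) l = - foldl br x l.
Proof. by elim: l x => //= z l IH x; rewrite brNl IH. Qed.
Lemma foldl_sgn e x l : foldl br (sgn e x) l = sgn e (foldl br x l).
Proof. by case: e => //=; rewrite foldlN. Qed.

Lemma foldl_sum (T : Type) (r : seq T) (G : T -> L) l :
  foldl br (\sum_(p <- r) G p) l = \sum_(p <- r) foldl br (G p) l.
Proof.
elim: r => [|p r IH]; first by rewrite !big_nil foldl0.
by rewrite !big_cons foldlD IH.
Qed.

Lemma br_suml (T : Type) (r : seq T) (G : T -> L) z :
  br (\sum_(p <- r) G p) z = \sum_(p <- r) br (G p) z.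
Proof. exact: (foldl_sum r G [:: z]). Qed.

Lemma sgn_brl e x z : br (sgn e x) z = sgn e (br x z).
Proof. by case: e => //=; rewrite brNl. Qed.

End LieRing.

Fixpoint ex (T : Type) (r : seq T) : seq (bool * seq T) :=
  match r with
  | [::] => [::]
  | y :: r' => if r' is [::] then [:: (false, [:: y])]
      else [seq (p.1, rcons p.2 y) | p <- ex r'] ++ [seq (~~ p.1, y :: p.2) | p <- ex r']
  end.

Section Expand.
Variables (L : zmodType) (br : L -> L -> L).
Hypothesis H : is_lie_ring br.
Variables (T : eqType) (a : T -> L).

Lemma sgnN e (v : L) : sgn (~~ e) v = - sgn e v.
Proof. by case: e => //=; rewrite opprK. Qed.

Lemma ex_expand u X : u != [::] ->
  br X (lnbr br (map a u)) = \sum_(p <- ex (rev u)) sgn p.1 (foldl br X (map a p.2)).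
Proof.
elim/last_ind: u X => [//|u y IH] X _.
rewrite rev_rcons.
case: u IH => [_ | x t IH].
  by rewrite /= big_cons big_nil addr0.
have -> : ex (y :: rev (x :: t)) = [seq (p.1, rcons p.2 y) | p <- ex (rev (x :: t))] ++
   [seq (~~ p.1, y :: p.2) | p <- ex (rev (x :: t))].
  case E: (rev (x :: t)) => [|z r] //.
  by move: (congr1 size E); rewrite size_rev.
rewrite big_cat !big_map /=.
rewrite map_rcons foldl_rcons.
have -> : foldl br (a x) (map a t) = lnbr br (map a (x :: t)) by [].
rewrite (brX H) (IH X) // (IH (br X (a y))) //.
rewrite (br_suml H) -sumrN; congr (_ + _); apply: eq_bigr => p _.
  by rewrite map_rcons foldl_rcons (sgn_brl H).
by rewrite sgnN.
Qed.

End Expand.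

Section ExFacts.
Variable T : eqType.

Lemma ex_perm (r : seq T) p : p \in ex r -> perm_eq p.2 r.
Proof.
elim: r p => [|y r IH] p //=.
case: r IH => [_|x r IH]; first by rewrite inE => /eqP ->.
rewrite mem_cat => /orP [] /mapP [q Hq ->] /=.
  by rewrite perm_rcons perm_cons IH.
by rewrite perm_cons IH.
Qed.

Lemma ex_uniq (r : seq T) : uniq r -> uniq (map snd (ex r)).
Proof.
elim: r => [|y r IH] //=.
case: r IH => [//|x r IH] /andP [Hy Hu].
set E := ex (x :: r).
have -> : [seq p.2 | p <- [seq (p.1, rcons p.2 y) | p <- E] ++ [seq (~~ p.1, y :: p.2) | p <- E]]
  = [seq rcons p.2 y | p <- E] ++ [seq y :: p.2 | p <- E].
  by rewrite map_cat -!map_comp.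
rewrite cat_uniq (map_comp (fun s => rcons s y) snd) (map_comp (cons y) snd).
rewrite map_inj_uniq; last by move=> s1 s2 /rcons_inj [].
rewrite [uniq (map (cons y) _)]map_inj_uniq; last by move=> s1 s2 [].
rewrite IH //.
rewrite andbT; apply/hasPn => s /mapP [q Hq ->].
apply/mapP => [[q' Hq']].
have [p Hp Ep] : exists2 p, p \in E & q' = p.2 by apply/mapP.
subst q'.
have Hper := ex_perm Hp.
case: p.2 Hper => [|c q''] Hper; first by have := perm_size Hper.
move=> [Ec _]; subst c.
by move: Hy; rewrite -(perm_mem Hper) mem_head.
Qed.

Lemma ex1 (y : T) p : p \in ex [:: y] -> p.1 = false.
Proof. by rewrite inE => /eqP ->. Qed.

End ExFacts.

Lemma in_symdiff (aT : finType) (x : aT) A B : (x \in symdiff A B) = (x \in A) (+) (x \in B).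
Proof. by rewrite !inE; case: (x \in A); case: (x \in B). Qed.

Lemma symdiff_seq_cat (aT : finType) (s1 s2 : seq {set aT}) :
  symdiff_seq (s1 ++ s2) = symdiff (symdiff_seq s1) (symdiff_seq s2).
Proof.
elim: s1 => [|U s1 IH] /=; apply/setP => x.
  by rewrite in_symdiff inE.
by rewrite !in_symdiff IH in_symdiff addbA.
Qed.

Section Words.
Variable m : nat.
Local Notation n := m.+2.
Local Notation I := 'I_n.

Definition wd (s : {perm I}) : seq I := [seq s i | i <- enum I].
Definition valid (w : seq I) := perm_eq w (enum I).
Definition setw (P : seq (seq I)) : {set {perm I}} := [set s | wd s \in P].
Definition swap (w : seq I) := if w is x :: y :: t then y :: x :: t else w.
Definition inW (X : {set {perm I}}) := exists Ts, (forall U, U \in Ts -> jacobi_set U) /\ X = symdiff_seq Ts.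

Lemma wd_inj : injective wd.
Proof.
move=> s t /eq_in_map E; apply/permP => i; exact: E (mem_enum _ i).
Qed.

Lemma wd_valid s : valid (wd s).
Proof.
apply: uniq_perm; first by rewrite map_inj_uniq ?enum_uniq //; exact: perm_inj.
  exact: enum_uniq.
by move=> x; rewrite mem_enum -[x](permKV s) map_f ?mem_enum.
Qed.

Lemma valid_wd w : valid w -> exists s, wd s = w.
Proof.
move=> Hw; have Hu : uniq w by rewrite (perm_uniq Hw) enum_uniq.
have Hs : size w = n by rewrite (perm_size Hw) size_enum_ord.
have inj : injective (fun i : I => nth ord0 w i).
  move=> i j /eqP; rewrite nth_uniq ?Hs // => /eqP; exact: val_inj.
exists (perm inj); rewrite /wd.
rewrite (eq_map (permE inj)).
rewrite -[in RHS](mkseq_nth ord0 w) Hs /mkseq -val_enum_ord -map_comp.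
done.
Qed.

Lemma inW0 : inW set0.
Proof. by exists [::]. Qed.
Lemma inW_jac U : jacobi_set U -> inW U.
Proof.
move=> HU; exists [:: U]; split; first by move=> V; rewrite inE => /eqP ->.
by apply/setP => x; rewrite /= in_symdiff inE addbF.
Qed.
Lemma inW_sym X Y : inW X -> inW Y -> inW (symdiff X Y).
Proof.
move=> [T1 [H1 ->]] [T2 [H2 ->]]; exists (T1 ++ T2); split.
  by move=> U; rewrite mem_cat => /orP[/H1|/H2].
by rewrite symdiff_seq_cat.
Qed.

Lemma jsum_wd (L : zmodType) (br : L -> L -> L) T a :
  jacobi_sum br T a = \sum_(s in T) lnbr br (map a (wd s)).
Proof. by rewrite /jacobi_sum; apply: eq_bigr => s _; rewrite /wd -[in RHS]map_comp. Qed.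

Lemma sum_setw (L : zmodType) (F : seq I -> L) P : uniq P -> (forall w, w \in P -> valid w) ->
  \sum_(s in setw P) F (wd s) = \sum_(w <- P) F w.
Proof.
move=> Hu Hv; rewrite -big_image; apply: perm_big.
apply: uniq_perm => //.
  by rewrite map_inj_uniq ?enum_uniq //; exact: wd_inj.
move=> w; apply/imageP/idP => [[s]|Hw].
  by rewrite inE => ? ->.
by have [s Es] := valid_wd (Hv _ Hw); exists s; rewrite // inE Es.
Qed.

Lemma jac_setw P : uniq P -> (forall w, w \in P -> valid w) ->
  (forall (L : zmodType) (br : L -> L -> L), is_lie_ring br -> forall a : I -> L,
     \sum_(w <- P) lnbr br (map a w) = 0) -> jacobi_set (setw P).
Proof.
move=> Hu Hv HJ L br Hbr a; rewrite jsum_wd.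
rewrite (sum_setw (fun w => lnbr br (map a w))) //; exact: HJ.
Qed.

Lemma lnbr_swap (L : zmodType) (br : L -> L -> L) (a : I -> L) w :
  is_lie_ring br -> valid w -> lnbr br (map a (swap w)) = - lnbr br (map a w).
Proof.
move=> Hbr Hw; have : size w = n by rewrite (perm_size Hw) size_enum_ord.
case: w Hw => [|x [|y t]] //= _ _.
by rewrite (brC Hbr (a x) (a y)) (foldlN Hbr).
Qed.

Lemma valid_swap w : valid w -> valid (swap w).
Proof.
rewrite /valid => Hw; apply: (perm_trans _ Hw); clear Hw.
by case: w => [|x [|y t]] //=; apply/seq.permP => p /=; rewrite addnCA.
Qed.

Lemma swap_neq w : valid w -> swap w != w.
Proof.
move=> Hw; have Hu : uniq w by rewrite (perm_uniq Hw) enum_uniq.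
have : size w = n by rewrite (perm_size Hw) size_enum_ord.
case: w Hw Hu => [|x [|y t]] //= _ + _.
by rewrite eqseq_cons => /andP [/negP H1 _]; apply/negP => /andP [/eqP E _]; apply H1; rewrite E mem_head.
Qed.

Lemma catC1 (T : eqType) (P N : seq T) w : perm_eq (P ++ w :: N) (w :: P ++ N).
Proof. by rewrite -cat1s perm_catCA. Qed.

Lemma swapK w : swap (swap w) = w.
Proof. by case: w => [|x [|y t]]. Qed.

Lemma PN_inW (N P : seq (seq I)) :
  (forall w, w \in P ++ N -> valid w) -> uniq (P ++ N) ->
  (forall w, w \in N -> swap w \notin P ++ N) ->
  (forall (L : zmodType) (br : L -> L -> L), is_lie_ring br -> forall a : I -> L,
     \sum_(w <- P) lnbr br (map a w) - \sum_(w <- N) lnbr br (map a w) = 0) ->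
  inW (setw (P ++ N)).
Proof.
elim: N P => [|w N IH] P Hv Hu Hsw HJ.
  rewrite cats0; apply: inW_jac; apply: jac_setw.
  - by rewrite -(cats0 P).
  - by move=> w; rewrite -(cats0 P); exact: Hv.
  by move=> L br Hbr a; have := HJ L br Hbr a; rewrite big_nil subr0.
have Hw : valid w by apply: Hv; rewrite mem_cat mem_head orbT.
have Hsw' : swap w \notin P ++ w :: N by apply: Hsw; rewrite mem_head.
have Hne := swap_neq Hw.
have -> : setw (P ++ w :: N) = symdiff (setw ((swap w :: P) ++ N)) (setw [:: w; swap w]).
  apply/setP => s; rewrite in_symdiff !inE !mem_cat in_cons.
  have [->|Hs1] := eqVneq (wd s) w.
    move: Hu; rewrite cat_uniq /= => /and3P [_ /norP [/negP H1 _] /andP [/negP H2 _]].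
    by rewrite orbT eq_sym (negbTE Hne) (introF idP H1) (introF idP H2).
  have [->|Hs2] := eqVneq (wd s) (swap w).
    by move: Hsw'; rewrite mem_cat in_cons negb_or (negbTE Hne) /= => /andP [/negbTE -> /negbTE ->].
  Show. by rewrite /= addbF.
apply: inW_sym.
  apply: IH.
  - move=> v; rewrite /= in_cons => /orP [/eqP ->|]; first exact: valid_swap.
    by move=> Hv'; apply: Hv; move: Hv'; rewrite !mem_cat in_cons => /orP [->|->]; rewrite ?orbT.
  - rewrite /=.
    rewrite (perm_uniq (catC1 _ _ _)) in Hu; move: Hu => /= /andP [_ ->].
    by move: Hsw'; rewrite (perm_mem (catC1 _ _ _)) in_cons negb_or => /andP [_ ->].
  - move=> v Hv'; have := Hsw v; rewrite in_cons Hv' orbT => /(_ isT).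
    rewrite (perm_mem (catC1 _ _ _)) in_cons => /norP [_ H2].
    rewrite /= in_cons negb_or H2 andbT.
    apply/eqP => /(congr1 swap); rewrite !swapK => E; subst v.
    by move: Hu; rewrite (perm_uniq (catC1 _ _ _)) /= mem_cat Hv' orbT.
  - move=> L br Hbr a; rewrite big_cons (lnbr_swap a Hbr Hw).
    have := HJ L br Hbr a; rewrite big_cons => E; rewrite -[RHS]E opprD addrA; congr (_ - _); exact: addrC.
apply: inW_jac; apply: jac_setw.
- by rewrite /= inE andbT eq_sym.
- by move=> v; rewrite !inE => /orP [/eqP ->|/eqP ->] //; exact: valid_swap.
- move=> L br Hbr a; rewrite !big_cons big_nil addr0 (lnbr_swap a Hbr Hw).
  by rewrite addrN.
Qed.

End Words.

Lemma split_in (T : eqType) (x : T) s : x \in s -> exists u v, s = u ++ x :: v.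
Proof. by case/splitPr => u v; exists u, v. Qed.

Lemma catsI (T : eqType) (v s1 s2 : seq T) : s1 ++ v = s2 ++ v -> s1 = s2.
Proof.
move=> E; have Hs : size s1 = size s2 by move: (congr1 size E); rewrite !size_cat => /addIn.
by apply/eqP; move/eqP: E; rewrite eqseq_cat // eqxx andbT.
Qed.

Lemma sum_sgn_split (L : zmodType) (T : Type) (E : seq (bool * T)) (F : T -> L) :
  \sum_(p <- E) sgn p.1 (F p.2) =
  \sum_(p <- filter (predC (fun p : bool * T => p.1)) E) F p.2 -
  \sum_(p <- filter (fun p : bool * T => p.1) E) F p.2.
Proof.
elim: E => [|[[] x] E IH] /=; first by rewrite !big_nil subr0.
  by rewrite !big_cons IH opprD addrCA.
by rewrite !big_cons IH addrA.
Qed.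

Section Reduce.
Variable m : nat.
Local Notation n := m.+2.
Local Notation I := 'I_n.
Local Notation z := (ord0 : I).

Definition Bset : {set {perm I}} := [set s : {perm I} | s ord0 == z].

Lemma wd_head (s : {perm I}) : exists t, wd s = s ord0 :: t.
Proof. by rewrite /wd enum_ordSl /=; eexists. Qed.

Lemma main_identity (L : zmodType) (br : L -> L -> L) (a : I -> L) u v :
  is_lie_ring br -> u != [::] ->
  lnbr br (map a (u ++ z :: v)) +
  \sum_(p <- ex (rev u)) sgn p.1 (lnbr br (map a (z :: p.2 ++ v))) = 0.
Proof.
move=> Hbr; case: u => [//|x t] _.
have -> : lnbr br (map a ((x :: t) ++ z :: v)) =
   foldl br (br (lnbr br (map a (x :: t))) (a z)) (map a v).
  by rewrite /= map_cat foldl_cat.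
rewrite (brC Hbr) (ex_expand Hbr) // (foldlN Hbr) (foldl_sum Hbr).
rewrite addrC; apply/eqP; rewrite subr_eq0; apply/eqP; apply: eq_bigr => p _.
by rewrite (foldl_sgn Hbr) /= map_cat foldl_cat.
Qed.

Lemma reduce1 (s : {perm I}) : exists X : {set {perm I}}, X \subset Bset /\ inW (symdiff [set s] X).
Proof.
case Hs: (s ord0 == z).
  exists [set s]; split; first by rewrite sub1set inE Hs.
  have -> : symdiff [set s] [set s] = set0.
    by apply/setP => x; rewrite in_symdiff addbb inE.
  exact: inW0.
set w := wd s.
have Hvw : valid w := wd_valid s.
have Huw : uniq w by rewrite (perm_uniq Hvw) enum_uniq.
have [u [v Ew]] : exists u v, w = u ++ z :: v by apply: split_in; rewrite (perm_mem Hvw) mem_enum.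
have Hu0 : u != [::].
  apply/eqP => Eu; have [t Et] := wd_head s; move: Ew; rewrite /w Et Eu /= => [[E _]].
  by rewrite E eqxx in Hs.
have Hzu : z \notin u by move: Huw; rewrite Ew cat_uniq /= negb_or => /and3P [_ /andP [H _] _].
set E := ex (rev u).
set f := fun p : bool * seq I => z :: p.2 ++ v.
set P := w :: map f (filter (predC (fun p : bool * seq I => p.1)) E).
set N := map f (filter (fun p : bool * seq I => p.1) E).
have HPN : perm_eq (P ++ N) (w :: map f E).
  rewrite /P /N /= perm_cons -map_cat perm_map // perm_sym.
  by rewrite -(perm_filterC (fun p : bool * seq I => p.1) E) perm_catC.
have HvE : forall p, p \in E -> valid (f p).
  move=> p Hp; rewrite /valid /f; apply: (perm_trans _ Hvw).
  rewrite Ew perm_sym (perm_trans (catC1 _ _ _)) // perm_cons perm_cat2r.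
  by rewrite perm_sym (perm_trans (ex_perm Hp)) // perm_rev.
have Hfinj : injective f -> True by [].
have HmapE : map f E = map (fun s => z :: s ++ v) (map snd E) by rewrite -map_comp.
have HwE : w \notin map f E.
  apply/mapP => [[p _ Ep]]; have [t Et] := wd_head s.
  by move: Ep; rewrite /w Et /f => [[E1 _]]; rewrite E1 eqxx in Hs.
have Hunq : uniq (w :: map f E).
  rewrite /= HwE HmapE map_inj_uniq; last by move=> s1 s2 [] /catsI.
  apply: ex_uniq; rewrite rev_uniq; move: Huw; rewrite Ew cat_uniq => /andP [] //.
have HinW : inW (setw (P ++ N)).
  apply: PN_inW.
  - move=> x; rewrite (perm_mem HPN) in_cons => /orP [/eqP ->|/mapP [p Hp ->]] //.
    exact: HvE.
  - by rewrite (perm_uniq HPN).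
  - move=> x /mapP [p]; rewrite mem_filter => /andP [Hp1 Hp] ->.
    rewrite (perm_mem HPN) in_cons negb_or.
    have Hper := ex_perm Hp.
    have Hsz : (1 < size u)%N.
      case Eu: u Hu0 => [//|y [|y' t]] // _.
      have Hp' : p \in ex (rev [:: y]) by rewrite -Eu.
      by move: Hp1; rewrite (ex1 Hp').
    case Ep: p.2 Hper => [|c q] Hper; first by move: Hsz; rewrite -size_rev -(perm_size Hper).
    have Hcu : c \in u by rewrite -mem_rev -(perm_mem Hper) mem_head.
    have Hcz : c != z by apply/eqP => Ecz; rewrite -Ecz Hcu in Hzu.
    apply/andP; split.
      apply/eqP; rewrite /f Ep /= => Ew'.
      have : nth z w 1 = z by rewrite -Ew'.
      rewrite Ew nth_cat Hsz => Ez.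
      by move: Hzu; rewrite -{1}Ez mem_nth.
    apply/mapP => [[p' _]]; rewrite /f Ep /= => [[Ec]].
    by rewrite Ec eqxx in Hcz.
  - move=> L br Hbr a.
    rewrite /P /N big_cons !big_map.
    have := main_identity a v Hbr Hu0; rewrite (sum_sgn_split _ (fun s => lnbr br (map a (z :: s ++ v)))) => E0.
    by rewrite -[RHS]E0 Ew addrA.
exists (setw (map f E)); split.
  apply/subsetP => t; rewrite !inE => /mapP [p _ Ep].
  by have [t' Et] := wd_head t; move: Ep; rewrite Et /f => [[->]].
suff -> : symdiff [set s] (setw (map f E)) = setw (P ++ N) by [].
apply/setP => t; rewrite in_symdiff in_set1 !in_set (perm_mem HPN) in_cons.
have [->|Hts] := eqVneq t s.
  by rewrite eqxx /= (negbTE HwE).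
suff -> : (wd t == w) = false by [].
by apply/negbTE; apply: contra Hts => /eqP /wd_inj ->.
Qed.

End Reduce.

Lemma F2_xor (b1 b2 : bool) : ((b1 (+) b2)%:R : 'F_2) = b1%:R + b2%:R.
Proof. by case: b1; case: b2; rewrite /= ?addr0 ?add0r //; apply/eqP. Qed.

Lemma lie2_ring (L : lmodType 'F_2) (br : L -> L -> L) : is_lie_algebra_F2 br -> is_lie_ring br.
Proof.
case=> H1 H2 H3 H4; split=> //.
  by move=> x y zz; have := H1 1 x y zz; rewrite !scale1r.
by move=> x y zz; have := H2 1 x y zz; rewrite !scale1r.
Qed.

Lemma jac_jac2 n (U : {set {perm 'I_n}}) : jacobi_set U -> jacobi2_set U.
Proof. by move=> HU L br Hbr a; apply: HU; exact: lie2_ring. Qed.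

Lemma sum_ind (L : lmodType 'F_2) (aT : finType) (A : {set aT}) (F : aT -> L) :
  \sum_(s in A) F s = \sum_s (s \in A)%:R *: F s.
Proof.
rewrite big_mkcond; apply: eq_bigr => s _.
by case: (s \in A); rewrite ?scale1r ?scale0r.
Qed.

Lemma jac2_sym n (A B : {set {perm 'I_n}}) :
  jacobi2_set A -> jacobi2_set B -> jacobi2_set (symdiff A B).
Proof.
move=> HA HB L br Hbr a; have := HA L br Hbr a; have := HB L br Hbr a.
rewrite /jacobi_sum !sum_ind => EB EA.
under eq_bigr => s _ do rewrite in_symdiff F2_xor scalerDl.
by rewrite big_split /= EA EB addr0.
Qed.

Lemma symdiff_seq_jac2 n (Ts : seq {set {perm 'I_n}}) :
  (forall U, U \in Ts -> jacobi_set U) -> jacobi2_set (symdiff_seq Ts).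
Proof.
elim: Ts => [|U Ts IH] HU /=.
  by move=> L br Hbr a; rewrite /jacobi_sum big_set0.
apply: jac2_sym; first by apply: jac_jac2; apply: HU; rewrite mem_head.
by apply: IH => V HV; apply: HU; rewrite in_cons HV orbT.
Qed.

Lemma zmod6 (V : zmodType) (a1 a2 a3 a4 a6 a7 : V) : a1 - a2 + (a4 - a3) + (a3 - a6 + (a2 - a7)) + (a7 - a4 + (a6 - a1)) = 0.
Proof.
rewrite !addrA !subrK (addrAC (a1 - a2 + a4) (- a6) a2) (addrAC (a1 - a2) a4 a2) subrK.
by rewrite (addrAC (a1 + a4) (- a6) (- a4)) addrK subrK subrr.
Qed.

Section Comm.
Variable R : algType 'F_2.
Definition cbr (x y : R) := x * y - y * x.

Lemma cbr_lie : is_lie_algebra_F2 cbr.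
Proof.
rewrite /cbr; split.
- move=> a x y zz; rewrite mulrDl mulrDr -scalerAl -scalerAr scalerBr opprD addrACA.
  done.
- move=> a x y zz; rewrite mulrDl mulrDr -scalerAl -scalerAr scalerBr opprD addrACA.
  done.
- by move=> x; rewrite subrr.
- move=> x y zz; rewrite !mulrBr !mulrBl !mulrA.
  rewrite !opprB.
  exact: zmod6.
Qed.
End Comm.

Section Indep.
Variable m : nat.
Local Notation n := m.+2.
Local Notation I := 'I_n.
Local Notation Mat := 'M['F_2]_(n.+1).

Lemma mulmx_delta_r (M : Mat) (r c' i c : 'I_n.+1) : (M *m delta_mx r c') i c = M i r * (c == c')%:R.
Proof.
rewrite mxE (bigD1 r) //= big1 ?addr0; first by rewrite mxE eqxx.
by move=> j Hj; rewrite mxE (negbTE Hj) mulr0.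
Qed.

Lemma mulmx_delta_l (M : Mat) (r c' i c : 'I_n.+1) : (delta_mx r c' *m M) i c = (i == r)%:R * M c' c.
Proof.
rewrite mxE (bigD1 c') //= big1 ?addr0; first by rewrite mxE eqxx andbT.
by move=> j Hj; rewrite mxE (negbTE Hj) andbF mul0r.
Qed.

Variable sg : {perm I}.
Definition Aop (i : I) : Mat := delta_mx (widen_ord (leqnSn n) ((sg^-1)%g i)) (lift ord0 ((sg^-1)%g i)).

Lemma row0_fold l (M : Mat) k b :
  (forall c : 'I_n.+1, M ord0 c = (b && (c == k :> nat))%:R) ->
  all (fun i => i != sg ord0) l ->
  forall c : 'I_n.+1, (foldl (@cbr _) M (map Aop l)) ord0 c =
    ((b && (map (fun i => nat_of_ord ((sg^-1)%g i)) l == iota k (size l))) && (c == (k + size l)%N :> nat))%:R.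
Proof.
elim: l M k b => [|i l IH] M k b HM /=.
  by move=> _ c; rewrite HM andbT addn0.
move=> /andP [Hi Hl] c.
rewrite (IH _ k.+1 (b && (nat_of_ord ((sg^-1)%g i) == k))) //.
  by rewrite eqseq_cons andbA addSnnS.
move=> c'; rewrite /cbr mxE -!mulmxE.
rewrite /Aop mulmx_delta_r mxE mulmx_delta_l HM.
have -> : (ord0 == widen_ord (leqnSn n) ((sg^-1)%g i)) = false.
  apply/negbTE; apply: contra Hi => /eqP /(congr1 val) /= E.
  by apply/eqP; rewrite -[i](permKV sg); congr (sg _); apply: val_inj; rewrite /= -E.
rewrite mul0r subr0 -natrM mulnb.
case: (nat_of_ord ((sg^-1)%g i) =P k) => [Eq|Nq]; rewrite ?andbT ?andbF //=.
  by rewrite -val_eqE /= /bump leq0n add1n Eq.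
Qed.

Hypothesis Hsg : sg ord0 = ord0.

Definition gpos (i : I) : nat := (sg^-1)%g i.

Lemma gpos_inj : injective gpos.
Proof. by move=> i j /val_inj /perm_inj. Qed.

Lemma entry_wd (t : {perm I}) : t ord0 = ord0 ->
  (lnbr (@cbr _) (map Aop (wd t))) ord0 ord_max = (t == sg)%:R.
Proof.
move=> Ht.
have [l El] := wd_head t.
have Hu : uniq (ord0 :: l) by rewrite -Ht -El (perm_uniq (wd_valid t)) enum_uniq.
have Hsz : size l = m.+1.
  by have := congr1 size El; rewrite /wd size_map size_enum_ord /= => [[<-]].
rewrite El Ht /=.
rewrite (@row0_fold l (Aop ord0) 1 true).
- rewrite Hsz /= eqxx andbT; congr (_%:R).
  have [ls Es] := wd_head sg.
  have Hg : map gpos (wd sg) = iota 0 n.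
    rewrite /wd -map_comp -val_enum_ord; apply: eq_map => i /=.
    by rewrite /gpos permK.
  move: Hg; rewrite Es /= {1}/gpos permK /= => [[Hls]].
  rewrite -Hls (_ : [seq _ | i <- l] = map gpos l) // (inj_eq (inj_map gpos_inj)).
  by rewrite -(inj_eq (@wd_inj m)) El Es Ht Hsg eqseq_cons eqxx.
- move=> c; rewrite /Aop mxE.
  have -> : (sg^-1)%g ord0 = ord0 by rewrite -{1}Hsg permK.
  by rewrite -!val_eqE /= /bump.
- rewrite Hsg; apply/allP => i Hi; apply: contraTneq Hi => ->.
  by move: Hu => /= /andP [].
Qed.

End Indep.

Lemma indep m (X : {set {perm 'I_m.+2}}) : X \subset Bset m -> jacobi2_set X -> X = set0.
Proof.
move=> HXB HJ; apply/eqP/negPn/negP => /set0Pn [sg Hsg].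
have Hs0 t : t \in X -> t ord0 = ord0 by move/subsetP: HXB => H /H; rewrite inE => /eqP.
have := HJ _ (@cbr _) (cbr_lie _) (Aop sg).
move/(congr1 (fun M : 'M['F_2]_(m.+3) => M ord0 ord_max)); rewrite jsum_wd summxE mxE.
rewrite (eq_bigr (fun t => (t == sg)%:R)); last by move=> t Ht; rewrite entry_wd // ?Hs0.
rewrite (bigD1 sg) //= eqxx big1 ?addr0; first by move/eqP; rewrite oner_eq0.
by move=> t /andP [_ Hne]; rewrite (negbTE Hne).
Qed.

Lemma reduceT m (T : {set {perm 'I_m.+2}}) : exists X : {set {perm 'I_m.+2}}, X \subset Bset m /\ inW (symdiff T X).
Proof.
move: {2}#|T| (erefl #|T|) => k; elim: k T => [|k IH] T HT.
  exists set0; split; first exact: sub0set.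
  have -> : T = set0 by apply/eqP; rewrite -cards_eq0 HT.
  have -> : symdiff (set0 : {set {perm 'I_m.+2}}) set0 = set0 by apply/setP => x; rewrite in_symdiff inE.
  exact: inW0.
have /set0Pn [s Hs] : T != set0 by rewrite -cards_eq0 HT.
have HT' : #|T :\ s| = k by move: HT; rewrite (cardsD1 s T) Hs add1n => [[]].
have [X1 [H1 W1]] := IH _ HT'.
have [X2 [H2 W2]] := reduce1 s.
exists (symdiff X1 X2); split.
  apply/subsetP => x; rewrite in_symdiff.
  case Hx1: (x \in X1); first by move=> _; exact: (subsetP H1).
  by move=> /= Hx2; exact: (subsetP H2).
have -> : symdiff T (symdiff X1 X2) = symdiff (symdiff (T :\ s) X1) (symdiff [set s] X2).
  apply/setP => x; rewrite !in_symdiff !inE.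
  have [->|Hxs] := eqVneq x s; last by rewrite /= addbA.
  rewrite Hs /=.
  by case: (s \in X1); case: (s \in X2).
exact: inW_sym.
Qed.

Local Close Scope ring_scope.

Theorem corollary3 (n : nat) (hn : 2 <= n) (T : {set {perm 'I_n}}) :
  jacobi2_set T ->
  exists Ts : seq {set {perm 'I_n}},
    (forall U, U \in Ts -> jacobi_set U) /\ T = symdiff_seq Ts.
Proof.
case: n hn T => [|[|m]] // _ T HT.
have [X [HXB HW]] := reduceT T.
have HX2 : jacobi2_set X.
  have -> : X = symdiff T (symdiff T X) by apply/setP => x; rewrite !in_symdiff addbA addbb.
  apply: jac2_sym HT _; case: HW => Ts [HTs ->]; exact: symdiff_seq_jac2.
have X0 := indep HXB HX2.
move: HW; rewrite X0.
have -> : symdiff T set0 = T by apply/setP => x; rewrite in_symdiff inE addbF.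
by [].
Qed.
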